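(* Let $f:[0,1]\to\mathbb{R}$ with $f(0),f(1)\in\mathbb{Z}$ and let $n\in\mathbb{N}_+$. If $n\ge 3$, let also $\tilde\varphi_n:[0,1]\to\mathbb{R}$ satisfy \[ \tilde\varphi_n\left(\frac{k+1}{n}\right)-\tilde\varphi_n\left(\frac{k}{n}\right)\ge \frac12\left(\binom{n}{k}^{-1}+\binom{n}{k+1}^{-1}\right),\quad k=1,\dots,n-2. \] (a) If $f$ is monotone increasing on $[0,1/n]$ and on $[1-1/n,1]$, and (when $n\ge 3$) $f(x)-\tilde\varphi_n(x)$ is monotone increasing on $[1/n,1-1/n]$, then $\widehat{B}_n(f)$ is monotone increasing on $[0,1]$. (b) If $f$ is monotone decreasing on $[0,1/n]$ and on $[1-1/n,1]$, and (when $n\ge3$) $f(x)+\tilde\varphi_n(x)$ is monotone decreasing on $[1/n,1-1/n]$, then $\widehat{B}_n(f)$ is monotone decreasing on $[0,1]$.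
   Context: For $n\in\mathbb{N}_+$ and $f:[0,1]\to\mathbb{R}$, $\widehat{B}_n(f)(x):=\sum_{k=0}^n \left\langle f\left(\frac{k}{n}\right)\binom{n}{k}\right\rangle x^k(1-x)^{n-k}$, where $\langle\alpha\rangle$ is the integer nearest to $\alpha$ (when $\alpha$ is a half-integer, $\langle\alpha\rangle$ may be either neighbouring integer, chosen arbitrarily; the result holds for any such choice). Monotone increasing/decreasing are meant in the non-strict sense. *)

(* Defs.v *)
From HB Require Import structures.
From mathcomp Require Import all_boot all_order all_algebra.
Set Implicit Arguments. Unset Strict Implicit. Unset Printing Implicit Defensive.
Import Order.TTheory GRing.Theory Num.Theory.
Local Open Scope ring_scope.

(* c k is an integer nearest to f(k/n) * C(n,k), ties broken arbitrarily:
   exactly the integers at distance <= 1/2. *)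
Definition nearest_int_coeffs (R : realFieldType) (f : R -> R) (n : nat)
  (c : nat -> int) : Prop :=
  forall k, (k <= n)%N ->
    `|(c k)%:~R - f (k%:R / n%:R) * ('C(n, k))%:R| <= (2:R)^-1.

Definition Bhat (R : realFieldType) (n : nat) (c : nat -> int) (x : R) : R :=
  \sum_(k < n.+1) (c k)%:~R * x ^+ k * (1 - x) ^+ (n - k).

Definition incr_on (R : realFieldType) (g : R -> R) (a b : R) : Prop :=
  forall x y, a <= x -> x <= y -> y <= b -> g x <= g y.
Definition decr_on (R : realFieldType) (g : R -> R) (a b : R) : Prop :=
  forall x y, a <= x -> x <= y -> y <= b -> g y <= g x.

(* Main.v *)
Require Import Defs.
From HB Require Import structures.
From mathcomp Require Import all_boot all_order all_algebra.
From mathcomp Require Import ring lra.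
Import Order.TTheory GRing.Theory Num.Theory.
Local Open Scope ring_scope.
Section T.
Variable R : realFieldType.
Lemma step_lo (N u v w : R) : 0 < N -> -(2^-1/N) <= u/N - v -> w <= v -> w * N <= u + 2^-1.
Proof.
move=> Np h hw; have Nn : N != 0 by rewrite gt_eqF.
have := ler_wpM2r (ltW Np) h; rewrite mulrBl mulNr !divfK // => h2.
have := ler_wpM2r (ltW Np) hw; lra.
Qed.
Lemma step_hi (N u v w : R) : 0 < N -> u/N - v <= 2^-1/N -> v <= w -> u <= w * N + 2^-1.
Proof.
move=> Np h hw; have Nn : N != 0 by rewrite gt_eqF.
have := ler_wpM2r (ltW Np) h; rewrite mulrBl !divfK // => h2.
have := ler_wpM2r (ltW Np) hw; lra.
Qed.
End T.
Section T2.
Variable R : realFieldType.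
Lemma mid_comb (b1 b2 f1 f2 p1 p2 i1 i2 : R): `|b1 - f1| <= 2^-1 * i1 -> `|b2 - f2| <= 2^-1 * i2 -> 2^-1*(i1+i2) <= p2 - p1 -> f1 - p1 <= f2 - p2 -> b1 <= b2.
Proof. rewrite !ler_norml => /andP[h1 h2] /andP[h3 h4] h5 h6; lra. Qed.
End T2.

Section S.
Variable R : realFieldType.
Definition S n (b : nat -> R) (x : R) :=
  \sum_(k < n.+1) b k * ('C(n,k))%:R * x ^+ k * (1 - x) ^+ (n - k).

Lemma S_rec n b x : S n.+1 b x = (1 - x) * S n b x + x * S n (fun k => b k.+1) x.
Proof.
rewrite /S big_ord_recl /= [in RHS]big_ord_recl /=.
under eq_bigr => i _ do rewrite /bump /= add1n binS natrD subSS mulrDr mulrDl mulrDl.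
rewrite big_split /= big_ord_recr /= (bin_small (ltnSn n)) mulr0 mul0r mul0r addr0.
rewrite !mulr_sumr.
have E1 : \sum_(i < n) b (i : nat).+1 * ('C(n, i.+1))%:R * x ^+ i.+1 * (1 - x) ^+ (n - i)
   = \sum_(i < n) (1 - x) * (b (bump 0 i) * ('C(n, bump 0 i))%:R * x ^+ bump 0 i * (1 - x) ^+ (n - bump 0 i)).
  apply: eq_bigr => i _; rewrite /bump /= add1n -(subnSK (ltn_ord i)) (exprS (1 - x)); ring.
rewrite E1.
have E2 : \sum_(i < n.+1) b (i : nat).+1 * ('C(n, i))%:R * x ^+ i.+1 * (1 - x) ^+ (n - i)
   = \sum_(i < n.+1) x * (b i.+1 * ('C(n, i))%:R * x ^+ i * (1 - x) ^+ (n - i)).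
  apply: eq_bigr => i _; rewrite exprS; ring.
rewrite E2 -!mulr_sumr !bin0 !subn0 (exprS (1 - x)) expr0; ring.
Qed.

Lemma S_le n b b' x : (forall k, (k <= n)%N -> b k <= b' k) -> 0 <= x -> x <= 1 ->
  S n b x <= S n b' x.
Proof.
move=> H x0 x1; apply: ler_sum => i _.
have h1 : 0 <= (1 - x) ^+ (n - i) by apply: exprn_ge0; rewrite subr_ge0.
have h2 : 0 <= x ^+ i by apply: exprn_ge0.
do 3 apply: ler_wpM2r => //.
by apply: H; rewrite -ltnS.
Qed.

Lemma S_mono n b x y : (forall k, (k < n)%N -> b k <= b k.+1) -> 0 <= x -> x <= y -> y <= 1 ->
  S n b x <= S n b y.
Proof.
elim: n b => [|n IH] b H x0 xy y1.
  by rewrite /S !big_ord1 /= !expr0.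
rewrite !S_rec.
have A := IH b (fun k hk => H k (ltnW hk)) x0 xy y1.
have B := IH (fun k => b k.+1) (fun k hk => H k.+1 hk) x0 xy y1.
have C : S n b x <= S n (fun k => b k.+1) x.
  apply: S_le; [move=> k hk; exact: H | exact: x0 | exact: le_trans xy y1].
set Ax := S n b x in A C *; set Ay := S n b y in A *.
set Bx := S n _ x in B C *; set By := S n _ y in B *.
rewrite -subr_ge0.
have -> : (1 - y) * Ay + y * By - ((1 - x) * Ax + x * Bx) =
  (1 - y) * (Ay - Ax) + y * (By - Bx) + (y - x) * (Bx - Ax) by ring.
have y0 : 0 <= y by exact: le_trans xy.
by rewrite !addr_ge0 // mulr_ge0 // subr_ge0.
Qed.

Lemma int_le_half (z w : int) : (z%:~R : R) <= w%:~R + 2^-1 -> (z <= w)%R.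
Proof.
move=> h; rewrite leNgt; apply/negP => hwz.
have : ((w + 1)%:~R : R) <= z%:~R by rewrite ler_int lezD1.
rewrite intrD /=; lra.
Qed.

Lemma near_b (f : R -> R) n c k : nearest_int_coeffs f n c -> (k <= n)%N ->
  `|(c k)%:~R / ('C(n,k))%:R - f (k%:R / n%:R)| <= 2^-1 * (('C(n,k))%:R)^-1.
Proof.
move=> H kn.
have Cp : (0 : R) < ('C(n,k))%:R by rewrite ltr0n bin_gt0.
have Cn : ('C(n,k))%:R != (0 : R) by rewrite gt_eqF.
rewrite -[f _ in X in `|X|](mulfK Cn) -mulrBl normrM (@ger0_norm _ (_^-1)); last by rewrite invr_ge0 ltW.
by apply: ler_wpM2r; [rewrite invr_ge0 ltW | exact: H].
Qed.

Lemma le_divN (n a b : nat) : (a <= b)%N -> a%:R / n%:R <= b%:R / (n%:R : R).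
Proof. by move=> h; apply: ler_wpM2r; [rewrite invr_ge0 ler0n | rewrite ler_nat]. Qed.

Lemma incr_part (f phi : R -> R) (n : nat) (c : nat -> int) :
  (0 < n)%N ->
  (exists z : int, f (0:R) = z%:~R) -> (exists z : int, f (1:R) = z%:~R) ->
  nearest_int_coeffs f n c ->
  ((3 <= n)%N -> forall k, (1 <= k)%N -> (k <= n - 2)%N ->
     phi (k.+1%:R / n%:R) - phi (k%:R / n%:R) >=
       (2:R)^-1 * (('C(n, k))%:R^-1 + ('C(n, k.+1))%:R^-1)) ->
  incr_on f (0:R) n%:R^-1 -> incr_on f (1 - n%:R^-1) 1 ->
    ((3 <= n)%N -> incr_on (fun x => f x - phi x) n%:R^-1 (1 - n%:R^-1)) ->
    incr_on (Bhat n c) (0:R) 1.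
Proof.
move=> n0 [z0 Hz0] [z1 Hz1] Hc Hphi If0 If1 Ifm.
set N : R := n%:R.
have Np : 0 < N by rewrite ltr0n.
have Nn : N != 0 by rewrite gt_eqF.
set b := fun k => (c k)%:~R / ('C(n,k))%:R : R.
have EB : forall x, Bhat n c x = S n b x.
  move=> x; apply: eq_bigr => i _; rewrite /b divfK //.
  by rewrite pnatr_eq0 -lt0n bin_gt0 leq_ord.
move=> x y x0 xy y1; rewrite !EB; apply: S_mono => // k kn.
have Hb : forall j, (j <= n)%N -> `|b j - f (j%:R / N)| <= 2^-1 * (('C(n,j))%:R)^-1.
  by move=> j jn; apply: near_b.
have c0 : b 0%N = z0%:~R.
  have := Hb 0%N isT; rewrite /b bin0 divr1 mul0r Hz0 invr1 mulr1 ler_norml => /andP[h1 h2].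
  apply/eqP; rewrite eq_le !ler_int; apply/andP; split; apply: int_le_half; lra.
have cn : b n = z1%:~R.
  have := Hb n (leqnn n); rewrite /b binn divr1 divff // Hz1 invr1 mulr1 ler_norml => /andP[h1 h2].
  apply/eqP; rewrite eq_le !ler_int; apply/andP; split; apply: int_le_half; lra.
have Ninv : N^-1 = 1%:R / N by rewrite mul1r.
case: k kn => [|k] kn.
  rewrite c0 /b bin1 -/N ler_pdivlMr //.
  have := Hb 1%N kn; rewrite /b bin1 -/N ler_norml => /andP[h1 _].
  have hf : f 0 <= f (1%:R / N).
    apply: If0; rewrite ?lexx // -?Ninv ?lexx // invr_ge0 ltW //.
  rewrite Hz0 in hf.
  have h3 := @step_lo R _ _ _ _ Np h1 hf.
  have hint : (z0 * n%:Z <= c 1%N)%R by apply: int_le_half; rewrite intrM -pmulrn.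
  by move: hint; rewrite -(ler_int R) intrM -pmulrn.
case: (k.+2 =P n) => [En | Nen].
  rewrite En cn /b ler_pdivrMr; last by rewrite ltr0n bin_gt0 ltnW.
  have CN : ('C(n, k.+1))%:R = N by rewrite /N -En binSn.
  rewrite CN.
  have := Hb k.+1 (ltnW kn); rewrite /b CN ler_norml => /andP[_ h2].
  have ep : k.+1%:R / N = 1 - N^-1.
    by apply: (mulIf Nn); rewrite divfK // mulrBl mul1r mulVf // /N -En -[k.+2]addn1 natrD addrK.
  have hf : f (1 - N^-1) <= f 1.
    by apply: If1; rewrite ?lexx // gerDl oppr_le0 invr_ge0 ltW.
  rewrite -ep in hf.
  rewrite Hz1 in hf.
  have h3 := @step_hi R _ _ _ _ Np h2 hf.
  have hint : (c k.+1 <= z1 * n%:Z)%R by apply: int_le_half; rewrite intrM -pmulrn.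
  by move: hint; rewrite -(ler_int R) intrM -pmulrn.
have kn3 : (k.+3 <= n)%N by rewrite -[(k.+3 <= n)%N]/(k.+2 < n)%N ltn_neqAle kn andbT; apply/eqP.
have n3 : (3 <= n)%N by apply: leq_trans kn3.
have := Hphi n3 k.+1 isT; rewrite -/N.
have kn2 : (k.+1 <= n - 2)%N by rewrite leq_subRL ?addn2 // ltnW.
move=> /(_ kn2) hp.
apply: (@mid_comb R _ _ _ _ _ _ _ _ (Hb k.+1 (ltnW kn)) (Hb k.+2 kn) hp).
have e1 : N^-1 = 1%:R / N by rewrite mul1r.
have e2 : 1 - N^-1 = (n - 1)%N%:R / N.
  by rewrite natrB // -/N mulrBl divff // mul1r.
apply: (Ifm n3 (k.+1%:R / N) (k.+2%:R / N)).
- by move: (@le_divN n 1 k.+1 isT); rewrite mul1r.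
- exact: (@le_divN n k.+1 k.+2 (leqnSn _)).
- have h : (k.+2 <= n - 1)%N by rewrite leq_subRL ?addn1 // ltnW.
  by move: (@le_divN n k.+2 (n - 1) h); rewrite natrB // mulrBl divff // mul1r.
Qed.
End S.
Theorem proposition2p9 (R : realFieldType) (f phi : R -> R) (n : nat)
  (c : nat -> int) :
  (0 < n)%N ->
  (exists z : int, f (0:R) = z%:~R) -> (exists z : int, f (1:R) = z%:~R) ->
  nearest_int_coeffs f n c ->
  ((3 <= n)%N -> forall k, (1 <= k)%N -> (k <= n - 2)%N ->
     phi (k.+1%:R / n%:R) - phi (k%:R / n%:R) >=
       (2:R)^-1 * (('C(n, k))%:R^-1 + ('C(n, k.+1))%:R^-1)) ->
  ((incr_on f (0:R) n%:R^-1 -> incr_on f (1 - n%:R^-1) 1 ->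
    ((3 <= n)%N -> incr_on (fun x => f x - phi x) n%:R^-1 (1 - n%:R^-1)) ->
    incr_on (Bhat n c) (0:R) 1)
  /\
   (decr_on f (0:R) n%:R^-1 -> decr_on f (1 - n%:R^-1) 1 ->
    ((3 <= n)%N -> decr_on (fun x => f x + phi x) n%:R^-1 (1 - n%:R^-1)) ->
    decr_on (Bhat n c) (0:R) 1)).
Proof.
move=> n0 h0 h1 Hc Hphi; split; first exact: incr_part.
move=> D0 D1 Dm.
have BN : forall x : R, Bhat n (fun k => - c k) x = - Bhat n c x.
  move=> x; rewrite /Bhat -sumrN; apply: eq_bigr => i _; rewrite mulrNz !mulNr //.
have := @incr_part R (fun x => - f x) phi n (fun k => - c k) n0.
case: h0 => z0 Hz0; case: h1 => z1 Hz1.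
move=> /(_ (ex_intro _ (- z0) _) (ex_intro _ (- z1) _)).
rewrite Hz0 Hz1 !mulrNz.
move=> /(_ erefl erefl) H.
have Hc' : nearest_int_coeffs (fun x => - f x) n (fun k => - c k).
  move=> k hk.
  rewrite (_ : _ - _ = - ((c k)%:~R - f (k%:R / n%:R) * ('C(n,k))%:R)) ?normrN.
    exact: Hc.
  rewrite mulrNz; ring.
move: H => /(_ Hc' Hphi) H.
have I0 : incr_on (fun x => - f x) 0 n%:R^-1.
  by move=> x y a b d; rewrite lerN2; exact: D0.
have I1 : incr_on (fun x => - f x) (1 - n%:R^-1) 1.
  by move=> x y a b d; rewrite lerN2; exact: D1.
have Im : (3 <= n)%N -> incr_on (fun x => - f x - phi x) n%:R^-1 (1 - n%:R^-1).
  move=> h3 x y a b d; have := Dm h3 x y a b d => /= h; lra.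
move: H => /(_ I0 I1 Im) H x y a b d.
have := H x y a b d; rewrite !BN lerN2 //.
Qed.
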